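(* Let $a>0$ and let $f:[0,\infty)\to[0,\infty)$ be defined by $f(x)=7x$ for $0\le x\le a$, $f(x)=8a-x$ for $a\le x\le 8a$, and $f(x)=0$ for $x\ge 8a$. Consider the problem of choosing a (possibly infinite) subset $U\subseteq(0,8a)$ maximizing $\sum_{x\in U}f(x)$ subject to the constraint that for all $x,y\in U$, $x<y$ implies $2x\le y$. Then the supremum (optimal value) of this problem is exactly $24a$ (and it is attained, e.g. by $U=\{4a/2^i : i\in\mathbb{N}\cup\{0\}\}$). *)

(* Defs.v *)
From HB Require Import structures.
From mathcomp Require Import all_boot all_order all_algebra.
From mathcomp Require Import all_classical all_reals all_analysis.
Set Implicit Arguments. Unset Strict Implicit. Unset Printing Implicit Defensive.
Import Order.TTheory GRing.Theory Num.Theory.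
Local Open Scope classical_set_scope.
Local Open Scope ring_scope.

(* The piecewise-linear tent function f on [0, oo) (values for x < 0 are
   irrelevant: admissible sets lie in (0, 8a)). *)
Definition tentf (R : realType) (a x : R) : R :=
  if x <= a then 7 * x else if x <= 8 * a then 8 * a - x else 0.

Definition admissible (R : realType) (a : R) (U : set R) : Prop :=
  U `<=` [set x | 0 < x < 8 * a] /\
  (forall x y, U x -> U y -> (x < y) -> (2 * x <= y)).

(* The objective value: sum of f over U (possibly infinite; sum of nonnegative
   terms in extended reals, = sup of finite partial sums). *)
Definition objective (R : realType) (a : R) (U : set R) : \bar R :=
  \esum_(x in U) (tentf a x)%:E.

(* Main.v *)
Set Warnings "-all".
Require Import Defs.
From HB Require Import structures.
From mathcomp Require Import all_boot all_order all_algebra.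
From mathcomp Require Import all_classical all_reals all_analysis.
From mathcomp Require Import ring lra.
Import Order.TTheory GRing.Theory Num.Theory.
Local Open Scope classical_set_scope.
Local Open Scope ring_scope.

Lemma tent_bd (R : realType) (a x : R) : 0 < a -> 0 < x -> x < 8 * a ->
  0 <= tentf a x /\ tentf a x <= 7 * x /\ tentf a x <= 8 * a - x.
Proof.
move=> ha hx hx8; rewrite /tentf; case: ifP => h1.
  by split; [|split]; lra.
by rewrite (ltW hx8); move/negbT: h1; rewrite -ltNge => h1; split; [|split]; lra.
Qed.

Lemma key (R : realType) (a : R) (U : set R) : 0 < a -> admissible a U ->
  forall s : seq R, sorted (fun u v => v <= u) s -> uniq s ->
  (forall x, x \in s -> U x) ->
  forall y, 0 <= y -> (forall x, x \in s -> x <= y) ->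
  let S := \sum_(x <- s) tentf a x in
  S <= 14 * y /\ S <= 8 * a + 6 * y /\ S <= 16 * a + 2 * y /\ S <= 24 * a.
Proof.
move=> ha [hsub hadm]; elim=> [|x t IH] /= hs hu hU y hy hle.
  rewrite big_nil; split; [|split; [|split]]; lra.
rewrite big_cons.
have Ux : U x by apply: hU; rewrite mem_head.
have /= /andP[x0 x8] := hsub _ Ux.
have [f0 [f1 f2]] := @tent_bd R a x ha x0 x8.
have xy : x <= y by apply: hle; rewrite mem_head.
move/andP: hu => [xt ut].
have allt := order_path_min (fun u v w (h1 : u <= v) (h2 : w <= u) => le_trans h2 h1) hs.
have hle' : forall z, z \in t -> z <= x / 2.
  move=> z hz.
  have Uz : U z by apply: hU; rewrite in_cons hz orbT.
  have zx : z <= x by move/allP: allt => /(_ z hz).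
  have zx' : z < x.
    by rewrite lt_neqAle zx andbT; apply/negP => /eqP e; move: xt; rewrite -e hz.
  have := hadm _ _ Uz Ux zx'; lra.
have [h1 [h2 [h3 h4]]] := IH (path_sorted hs) ut (fun z hz => hU z (mem_behead (s:=x::t) hz)) (x / 2)
  (ltW (divr_gt0 x0 (ltr0Sn _ 1))) hle'.
split; [|split; [|split]]; lra.
Qed.

Lemma obj_le (R : realType) (a : R) (U : set R) : 0 < a -> admissible a U ->
  (objective a U <= (24 * a)%:E)%E.
Proof.
move=> ha hU; rewrite /objective /esum; apply: ge_ereal_sup => _ [X [finX XU] <-].
rewrite fsbig_finite // sumEFin lee_fin.
set s := finmap.enum_fset (fset_set X).
set leT := fun u v : R => v <= u.
have P : perm_eq (sort leT s) s by rewrite perm_sort.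
rewrite -(perm_big _ P).
have memU : forall x, x \in sort leT s -> U x.
  by move=> x; rewrite mem_sort /s in_fset_set // => /set_mem /XU.
have := @key R a U ha hU (sort leT s) (sort_sorted (fun u v => le_total v u) s)
  _ memU (8 * a) _ _.
rewrite sort_uniq finmap.fset_uniq => /(_ isT).
move=> /(_ _ _) [] //.
- by apply: ltW; apply: mulr_gt0.
- by move=> x /memU /(proj1 hU) /andP[_ /ltW].
by move=> _ [_ [_ ]].
Qed.

Lemma tent_low (R : realType) (a x : R) : x <= a -> tentf a x = 7 * x.
Proof. by move=> h; rewrite /tentf h. Qed.

Lemma tent_mid (R : realType) (a x : R) : a < x -> x <= 8 * a -> tentf a x = 8 * a - x.
Proof. by move=> h1 h2; rewrite /tentf leNgt h1 /= h2. Qed.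

Section U0.
Variables (R : realType) (a : R).
Hypothesis ha : 0 < a.
Let e := fun i : nat => 4 * a / 2 ^+ i.

Lemma e_gt0 i : 0 < e i.
Proof. by rewrite /e divr_gt0 ?exprn_gt0 // mulr_gt0. Qed.

Lemma e_shift n k : e (n + k) * 2 ^+ k = e n.
Proof.
rewrite /e exprD; field.
by apply/andP; split; apply: expf_neq0; rewrite pnatr_eq0.
Qed.

Lemma e_half j k : 2 * e (j + k.+1) <= e j.
Proof.
have h := e_shift j k.+1; rewrite exprS in h.
have h1 : 1 <= (2 : R) ^+ k by apply: exprn_ege1; lra.
have h2 := e_gt0 (j + k.+1).
rewrite -h; nra.
Qed.

Lemma e_lt i j : (i < j)%N -> e j < e i.
Proof.
move=> hij; have := e_half i (j - i.+1); rewrite -addSnnS subnKC //.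
have := e_gt0 j; lra.
Qed.

Lemma e_le4 i : e i <= 4 * a.
Proof.
case: i => [|i]; first by rewrite /e expr0 divr1.
have := @e_lt 0 i.+1 (ltn0Sn i); rewrite /e expr0 divr1; lra.
Qed.

Lemma U0_adm : admissible a (range e).
Proof.
split.
  move=> _ [i _ <-] /=; have := e_le4 i; have := e_gt0 i.
  by move=> h1 h2; apply/andP; split; lra.
move=> _ _ [i _ <-] [j _ <-] hlt.
case: (ltnP j i) => hji.
  by have := e_half j (i - j.+1); rewrite -addSnnS subnKC.
case: (leqP j i) => hij.
  move: hlt; have -> : j = i by apply/eqP; rewrite eqn_leq hij hji.
  by rewrite ltxx.
by move: hlt; have := @e_lt i j hij; lra.
Qed.

Lemma S_val n : \sum_(i < n + 3) tentf a (e i) = 24 * a - 7 * a / 2 ^+ n.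
Proof.
elim: n => [|n IH].
  rewrite !big_ord_recr big_ord0 /= /e expr0 expr1 divr1.
  have -> : 4 * a / 2 = 2 * a by field.
  have -> : 4 * a / 2 ^+ 2 = a by rewrite expr2; field.
  have ha2 := ha. rewrite divr1 (@tent_mid _ a (4 * a)); [|lra|lra].
  rewrite (@tent_mid _ a (2 * a)); [|lra|lra].
  rewrite (@tent_low _ a a) //; lra.
rewrite addSn big_ord_recr IH /=.
rewrite (@tent_low _ a (e (n + 3))); last first.
  have := e_shift 2 (n.+1); rewrite addnC addSnnS.
  rewrite /e expr2 => h.
  have h1 : 1 <= (2 : R) ^+ n.+1 by apply: exprn_ege1; lra.
  have h2 := e_gt0 (n + 3); rewrite /e in h2.
  nra.
have hn : (2:R) ^+ n != 0 by apply: expf_neq0; rewrite pnatr_eq0.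
rewrite /e exprD !exprS expr0; by field.
Qed.

Lemma obj_ge : ((24 * a)%:E <= objective a (range e))%E.
Proof.
have ha2 := ha.
rewrite /objective esum_image; last first.
  move=> i j _ _ h; case: (ltngtP i j) => // hij.
    by have := @e_lt i j hij; rewrite h ltxx.
  by have := @e_lt j i hij; rewrite h ltxx.
rewrite -nneseries_esumT; last first.
  move=> n; rewrite lee_fin.
  have h1 := e_gt0 n; have h2 := e_le4 n.
  have h3 : e n < 8 * a by lra.
  by have [] := @tent_bd R a (e n) ha h1 h3.
apply/lee_subgt0Pr => eps heps.
pose n := Num.Def.trunc (7 * a / eps).
have h1 : 7 * a / eps < 2 ^+ n.
  apply: (lt_le_trans (truncnS_gt _)).
  rewrite -natrX ler_nat; exact: ltn_expl.
have h2 : 7 * a / 2 ^+ n <= eps.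
  rewrite ler_pdivrMr ?exprn_gt0 //.
  by move: h1; rewrite ltr_pdivrMr // (mulrC eps) => /ltW.
apply: (le_trans _ (nneseries_lim_ge (m:=0) (n + 3) _)); last first.
  move=> k _ _; rewrite lee_fin.
  have := e_gt0 k; have := e_le4 k => h3 h4.
  have h5 : e k < 8 * a by lra.
  by have [] := @tent_bd R a (e k) ha h4 h5.
rewrite sumEFin -EFinB lee_fin big_mkord S_val; lra.
Qed.

End U0.

Theorem mainTheorem9 (R : realType) (a : R) (ha : 0 < a) :
  ereal_sup [set objective a U | U in admissible a] = (24 * a)%:E /\
  (let U0 := range (fun i : nat => 4 * a / 2 ^+ i) in
   admissible a U0 /\ objective a U0 = (24 * a)%:E).
Proof.
have hA := @U0_adm R a ha.
have hO : objective a (range (fun i : nat => 4 * a / 2 ^+ i)) = (24 * a)%:E.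
  by apply/eqP; rewrite eq_le (@obj_le R a _ ha hA) /= (@obj_ge R a ha).
split; last by split.
apply/eqP; rewrite eq_le; apply/andP; split.
  by apply: ge_ereal_sup => _ [U hU <-]; exact: (@obj_le R a U ha hU).
by rewrite -hO; apply: ereal_sup_ubound; exists (range (fun i : nat => 4 * a / 2 ^+ i)).
Qed.
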